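(* Let $h:\mathbb{R}^n \to \mathcal{Y}$ be a model with $\mathcal{Y} = \{\pm 1\}$, let $x\sim D$, let $g_1,g_2:\mathcal{X}\times\mathcal{Y} \to G$ be two EFs, and let $\epsilon,\epsilon_0,\epsilon_1,\alpha>0$ be constants. Assume that $g_1(x,h(x))$ and $g_2(x,h(x))$ $\epsilon$-intersect and denote by $\hat{g}(x,h(x))$ their $\epsilon$-union. If $g_1$ (or $g_2$) is $\epsilon_0$-valid with respect to $h$, then $\hat{g}$ is $\epsilon_0$-valid as well. Additionally, if $g_1$ (or $g_2$) is $(\epsilon_1,\alpha)$-complete with respect to $h$, then $\hat{g}$ is also $(\epsilon_1,\alpha)$-complete.
   Context: $D$ is a distribution supported on a discrete set $\mathcal{X}\subseteq\mathbb{R}^n$; $I(\cdot;\cdot)$ is Shannon mutual information of random variables that are functions of $x\sim D$; $\ell$ is a fixed loss function on $\mathcal{Y}\times\mathcal{Y}$. A function $q$ of $(x,h(x))$ with values in a set $Q$ is $\epsilon_0$-valid with respect to $h$ if there is $t:Q\to\mathcal{Y}$ with $\mathbb{E}_x[\ell(t(q(x,h(x))),h(x))]\le\epsilon_0$. Such $q$ is $(\epsilon_1,\alpha)$-complete with respect to $h$ if for every $d$, every $\bar g:\mathcal{X}\to\mathbb{R}^d$ with $I(q(x,h(x));\bar g(x))\le\epsilon_1$, and every $s:\mathbb{R}^d\to\mathcal{Y}$, $\mathbb{E}_x[\ell(s(\bar g(x)),h(x))]\ge\alpha$. Random variables $f_1(x)\in\mathcal{X}_1$, $f_2(x)\in\mathcal{X}_2$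 $\epsilon$-intersect if there are invertible functions $r_1:\mathcal{X}_1\to\mathcal{V}_1$, $r_2:\mathcal{X}_2\to\mathcal{V}_2$ with $r_1(f_1(x))=(e_1(x),u(x))$ and $r_2(f_2(x))=(e_2(x),u(x))$, where $I(e_i(x);f_j(x))\le\epsilon$ for $i\neq j\in\{1,2\}$; $u(x)$ is the $\epsilon$-intersection and $(e_1(x),u(x),e_2(x))$ the $\epsilon$-union of $f_1(x)$ and $f_2(x)$. *)

(* Defs.v *)
From HB Require Import structures.
From mathcomp Require Import all_boot all_order all_algebra.
From mathcomp Require Import all_classical all_reals all_analysis.
Set Implicit Arguments. Unset Strict Implicit. Unset Printing Implicit Defensive.
Import Order.TTheory GRing.Theory Num.Theory.
Local Open Scope classical_set_scope.
Local Open Scope ring_scope.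

Section Defs.
Variable R : realType.

Definition pm1 := {y : R | (y == 1) || (y == -1)}.

Definition discrete_set (T : topologicalType) (X : set T) : Prop :=
  forall x, X x -> \forall y \near x, X y -> y = x.

Definition is_distribution (T : choiceType) (X : set T) (D : T -> R) : Prop :=
  [/\ (forall x, 0 <= D x), (forall x, ~ X x -> D x = 0)
    & (\esum_(x in [set: T]) (D x)%:E = 1)%E].

Definition pr (T : choiceType) (D : T -> R) (A : set T) : \bar R :=
  \esum_(x in A) (D x)%:E.

Definition expect (T : choiceType) (D : T -> R) (f : T -> R) : \bar R :=
  (\esum_(x in [set: T]) (D x * Num.max (f x) 0)%:E
   - \esum_(x in [set: T]) (D x * Num.max (- f x) 0)%:E)%E.

(* pointwise term of KL(p || q) written with nonnegative summands:
   p ln(p/q) - p + q  (with 0 ln 0 = 0) *)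
Definition klterm (p q : R) : R :=
  if p == 0 then q else p * ln (p / q) - p + q.

(* Shannon mutual information (in nats) I(f(x); g(x)) of two random
   variables that are functions of x ~ D, i.e. KL(P_{f,g} || P_f x P_g). *)
Definition mutinfo (T A B : choiceType) (D : T -> R) (f : T -> A) (g : T -> B)
  : \bar R :=
  \esum_(ab in [set: A * B])
    (klterm (fine (pr D [set x | f x = ab.1 /\ g x = ab.2]))
            (fine (pr D [set x | f x = ab.1]) * fine (pr D [set x | g x = ab.2])))%:E.

Variable (T : choiceType) (D : T -> R) (ell : pm1 -> pm1 -> R) (h : T -> pm1).

Definition valid (Q : Type) (q : T -> pm1 -> Q) (eps0 : R) : Prop :=
  exists t : Q -> pm1,
    (expect D (fun x => ell (t (q x (h x))) (h x)) <= eps0%:E)%E.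

Definition complete (Q : choiceType) (q : T -> pm1 -> Q) (eps1 alpha : R) : Prop :=
  forall (d : nat) (gbar : T -> 'rV[R]_d) (s : 'rV[R]_d -> pm1),
    (mutinfo D (fun x => q x (h x)) gbar <= eps1%:E)%E ->
    (alpha%:E <= expect D (fun x => ell (s (gbar x)) (h x)))%E.

(* f1(x), f2(x) eps-intersect, with eps-intersection u(x) and
   eps-union (e1(x), u(x), e2(x)); the defining identities are required
   for every x in the support set X. *)
Definition eps_intersect (X : set T) (X1 X2 E1 E2 U : choiceType)
  (f1 : T -> X1) (f2 : T -> X2) (eps : R)
  (e1 : T -> E1) (u : T -> U) (e2 : T -> E2) : Prop :=
  exists (r1 : X1 -> E1 * U) (r2 : X2 -> E2 * U),
    [/\ bijective r1, bijective r2,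
        (forall x, X x -> r1 (f1 x) = (e1 x, u x)),
        (forall x, X x -> r2 (f2 x) = (e2 x, u x))
      & ((mutinfo D e1 f2 <= eps%:E) /\ (mutinfo D e2 f1 <= eps%:E))%E].

End Defs.

(* Main.v *)
Require Import Defs.
From HB Require Import structures.
From mathcomp Require Import all_boot all_order all_algebra.
From mathcomp Require Import all_classical all_reals all_analysis.
From mathcomp Require Import ring lra.
Import Order.TTheory GRing.Theory Num.Theory numFieldNormedType.Exports.
Local Open Scope classical_set_scope.
Local Open Scope ring_scope.
Section Aux.
Variable R : realType.

Lemma ln_le_sub1 (x : R) : 0 < x -> ln x <= x - 1.
Proof.
move=> x0; have := expR_ge1Dx (ln x); rewrite lnK ?posrE //; lra.
Qed.

Lemma kl_tangent (p q r : R) : 0 <= p -> 0 <= q -> 0 <= r ->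
  (0 < p -> 0 < q /\ 0 < r) -> p * ln r + q * (1 - r) <= klterm p q.
Proof.
move=> p0 q0 r0 H; rewrite /klterm.
have [->|pn0] := eqVneq p 0; first by rewrite mul0r add0r; nra.
have pp : 0 < p by rewrite lt_def pn0.
have [qp rp] := H pp.
have h1 : ln (q * r / p) <= q * r / p - 1 by apply: ln_le_sub1; rewrite !(mulr_gt0, invr_gt0).
have e1 : ln (q * r / p) = ln q + ln r - ln p.
  by rewrite ln_div ?lnM ?posrE ?mulr_gt0.
have e2 : ln (p / q) = ln p - ln q by rewrite ln_div ?posrE.
have h2 : p * ln (q * r / p) <= q * r - p.
  have : p * ln (q * r / p) <= p * (q * r / p - 1) by rewrite ler_wpM2l.
  by rewrite mulrBr mulr1 mulrCA mulfV ?mulr1 // gt_eqF.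
rewrite e1 in h2; rewrite e2; nra.
Qed.

Lemma kl_ge0 (p q : R) : 0 <= p -> 0 <= q -> (0 < p -> 0 < q) -> 0 <= klterm p q.
Proof.
move=> p0 q0 H; have := @kl_tangent p q 1 p0 q0 ler01.
rewrite ln1 mulr0 add0r subrr mulr0; apply => /H; split => //.
Qed.

End Aux.

Section Pr.
Variables (R : realType) (T : choiceType) (X : set T) (D : T -> R).
Hypotheses (hD0 : forall x, 0 <= D x) (hDX : forall x, ~ X x -> D x = 0)
  (hD1 : (\esum_(x in [set: T]) (D x)%:E = 1)%E).

Lemma esumZ (C : choiceType) (S : set C) (r : R) (a : C -> \bar R) :
  0 <= r -> (forall c, (0 <= a c)%E) ->
  (\esum_(c in S) (r%:E * a c) = r%:E * \esum_(c in S) a c)%E.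
Proof.
move=> r0 a0; rewrite /esum -ereal_supZl //; last first.
  apply/set0P; exists (\sum_(x \in set0) a x)%E; exists set0 => //.
  exact: fsets_set0.
congr ereal_sup; apply/seteqP; split => y /=.
  by move=> [A HA <-]; exists (\sum_(x \in A) a x)%E; [exists A|rewrite ge0_mule_fsumr].
by move=> [z [A HA <-] <-]; exists A => //; rewrite ge0_mule_fsumr.
Qed.

Lemma pr_ge0 A : (0 <= pr D A)%E.
Proof. by apply: esum_ge0 => x _; rewrite lee_fin. Qed.

Lemma pr_le1 A : (pr D A <= 1)%E.
Proof.
rewrite /pr esum_mkcond -hD1; apply: le_esum => x _.
by case: ifP => _ //; rewrite lee_fin.
Qed.

Lemma pr_fin A : pr D A \is a fin_num.
Proof.
by rewrite ge0_fin_numE ?pr_ge0 // (le_lt_trans (pr_le1 A)) // ltry.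
Qed.

Lemma prE A : (fine (pr D A))%:E = pr D A.
Proof. exact/fineK/pr_fin. Qed.

Lemma fpr_ge0 A : 0 <= fine (pr D A).
Proof. exact/fine_ge0/pr_ge0. Qed.

Lemma pr_eqX (A B : set T) : (forall x, X x -> (A x <-> B x)) -> pr D A = pr D B.
Proof.
move=> H; rewrite /pr esum_mkcond [RHS]esum_mkcond; apply: eq_esum => x _.
have [Xx|nXx] := pselect (X x).
  have -> : (x \in A) = (x \in B).
    by apply/idP/idP; rewrite !inE => /(H x Xx).
  by [].
by rewrite hDX //; case: ifP; case: ifP.
Qed.

Lemma pr_mono (A B : set T) : A `<=` B -> (pr D A <= pr D B)%E.
Proof.
move=> AB; rewrite /pr esum_mkcond [X in (_ <= X)%E]esum_mkcond.
apply: le_esum => x _; case: ifPn => xA.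
  by rewrite ifT // inE; apply: AB; rewrite -inE.
by case: ifP => _ //; rewrite lee_fin.
Qed.

Lemma fpr_mono (A B : set T) : A `<=` B -> fine (pr D A) <= fine (pr D B).
Proof. by move=> AB; apply: fine_le; rewrite ?pr_fin ?pr_mono. Qed.

Lemma pr_part (C A' : choiceType) (F : T -> C) (phi : C -> A') (a : A') (E : T -> Prop) :
  pr D [set x | phi (F x) = a /\ E x] =
  (\esum_(c in [set c | phi c = a]) pr D [set x | F x = c /\ E x])%E.
Proof.
rewrite /pr esum_esum; last by move=> *; rewrite lee_fin.
apply: (@reindex_esum _ _ _ _ _ snd); split.
- by move=> [c x] /= [pc [Fx Ex]]; split => //; rewrite Fx.
- move=> [c1 x1] [c2 x2]; rewrite !inE /= => -[_ [F1 _]] [_ [F2 _]] /= e.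
  by rewrite -F1 -F2 e.
- by move=> x /= [p Ex]; exists (F x, x).
Qed.

Lemma pr_part1 (C A' : choiceType) (F : T -> C) (phi : C -> A') (a : A') :
  pr D [set x | phi (F x) = a] =
  (\esum_(c in [set c | phi c = a]) pr D [set x | F x = c])%E.
Proof.
rewrite /pr esum_esum; last by move=> *; rewrite lee_fin.
apply: (@reindex_esum _ _ _ _ _ snd); split.
- by move=> [c x] /= [pc Fx]; rewrite Fx.
- move=> [c1 x1] [c2 x2]; rewrite !inE /= => -[_ F1] [_ F2] /= e.
  by rewrite -F1 -F2 e.
- by move=> x /= p; exists (F x, x).
Qed.

Lemma expect_eqX (f g : T -> R) : (forall x, X x -> f x = g x) ->
  expect D f = expect D g.
Proof.
move=> H; rewrite /expect; congr (_ - _)%E; apply: eq_esum => x _;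
  (have [Xx|nXx] := pselect (X x); [by rewrite H|by rewrite hDX // !mul0r]).
Qed.


Lemma kl_esum (C : choiceType) (S : set C) (p q : C -> R) (P Q : R) :
 (forall c, 0 <= p c) -> (forall c, 0 <= q c) -> (forall c, S c -> 0 < p c -> 0 < q c) ->
 (\esum_(c in S) (p c)%:E = P%:E)%E -> (\esum_(c in S) (q c)%:E = Q%:E)%E ->
 (0 < P -> 0 < Q) ->
 ((klterm P Q)%:E <= \esum_(c in S) (klterm (p c) (q c))%:E)%E.
Proof.
move=> p0 q0 pq hP hQ PQ.
have P0 : 0 <= P by rewrite -lee_fin -hP; apply: esum_ge0 => c _; rewrite lee_fin.
have Q0 : 0 <= Q by rewrite -lee_fin -hQ; apply: esum_ge0 => c _; rewrite lee_fin.
pose r := P / Q.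
have r0 : 0 <= r by rewrite divr_ge0.
have pP c : S c -> p c <= P.
  move=> Sc; rewrite -lee_fin -hP; apply: esum_ge; exists [set c].
    by split; [exact: finite_set1| move=> y ->].
  by rewrite fsbig_set1.
have key : klterm P Q = P * ln r + Q * (1 - r).
  rewrite /klterm /r; have [P00|Pn0] := eqVneq P 0.
    by rewrite P00 !mul0r; ring.
  have Pp : 0 < P by rewrite lt_def Pn0 P0.
  have Qp := PQ Pp.
  rewrite /r; field; by rewrite gt_eqF.
have tang c : S c -> p c * ln r + q c * (1 - r) <= klterm (p c) (q c).
  move=> Sc; apply: kl_tangent => // pc.
  have Pp : 0 < P := lt_le_trans pc (pP c Sc).
  by split; [exact: pq | rewrite divr_gt0 // PQ].
have k0 c : S c -> (0 <= (klterm (p c) (q c))%:E)%E.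
  by move=> Sc; rewrite lee_fin kl_ge0 // => /(pq c Sc).
rewrite key.
have [r1|r1] := lerP 1 r.
- have lr0 : 0 <= ln r := ln_ge0 r1.
  have H : ((P * ln r)%:E <= \esum_(c in S) (klterm (p c) (q c))%:E + (Q * (r - 1))%:E)%E.
    rewrite (_ : (P * ln r)%:E = \esum_(c in S) ((ln r)%:E * (p c)%:E))%E; last first.
      by rewrite esumZ // hP -EFinM mulrC.
    rewrite (_ : (Q * (r - 1))%:E = \esum_(c in S) ((r - 1)%:E * (q c)%:E))%E; last first.
      by rewrite esumZ ?subr_ge0 // hQ -EFinM mulrC.
    rewrite -esumD //; last by move=> c _; rewrite -EFinM lee_fin mulr_ge0 ?subr_ge0.
    apply: le_esum => c Sc; rewrite -!EFinM -EFinD lee_fin; have := tang c Sc; nra.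
  rewrite (_ : P * ln r + Q * (1 - r) = P * ln r - Q * (r - 1)); last by ring.
  by rewrite EFinB leeBlDr.
- have lr0 : 0 <= - ln r by rewrite oppr_ge0 ln_le0 // ltW.
  have H : ((Q * (1 - r))%:E <= \esum_(c in S) (klterm (p c) (q c))%:E + (P * (- ln r))%:E)%E.
    rewrite (_ : (Q * (1 - r))%:E = \esum_(c in S) ((1 - r)%:E * (q c)%:E))%E; last first.
      by rewrite esumZ ?subr_ge0 ?ltW // hQ -EFinM mulrC.
    rewrite (_ : (P * (- ln r))%:E = \esum_(c in S) ((- ln r)%:E * (p c)%:E))%E; last first.
      by rewrite esumZ // hP -EFinM mulrC.
    rewrite -esumD //; last by move=> c _; rewrite -EFinM lee_fin mulr_ge0.
    apply: le_esum => c Sc; rewrite -!EFinM -EFinD lee_fin; have := tang c Sc; nra.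
  rewrite (_ : P * ln r + Q * (1 - r) = Q * (1 - r) - P * (- ln r)); last by ring.
  by rewrite EFinB leeBlDr.
Qed.


Lemma dpi (C A' B : choiceType) (F : T -> C) (f : T -> A') (g : T -> B) (phi : C -> A') :
  (forall x, X x -> f x = phi (F x)) -> (mutinfo D f g <= mutinfo D F g)%E.
Proof.
move=> Hf.
have posq (C' : choiceType) (F' : T -> C') c b :
  0 < fine (pr D [set x | F' x = c /\ g x = b]) ->
  0 < fine (pr D [set x | F' x = c]) * fine (pr D [set x | g x = b]).
  by move=> h; apply: mulr_gt0; apply: (lt_le_trans h); apply: fpr_mono => x /= [].
have term0 (C' : choiceType) (F' : T -> C') c b :
  (0 <= (klterm (fine (pr D [set x | F' x = c /\ g x = b]))
      (fine (pr D [set x | F' x = c]) * fine (pr D [set x | g x = b])))%:E)%E.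
  by rewrite lee_fin kl_ge0 ?mulr_ge0 ?fpr_ge0 //; apply: posq.
rewrite /mutinfo.
have -> : (\esum_(cb in [set: C * B]) (klterm (fine (pr D [set x | F x = cb.1 /\ g x = cb.2]))
     (fine (pr D [set x | F x = cb.1]) * fine (pr D [set x | g x = cb.2])))%:E =
   \esum_(ab in [set: A' * B]) \esum_(c in [set c | phi c = ab.1])
     (klterm (fine (pr D [set x | F x = c /\ g x = ab.2]))
     (fine (pr D [set x | F x = c]) * fine (pr D [set x | g x = ab.2])))%:E)%E.
  rewrite esum_esum; last by move=> *; apply: term0.
  apply: (@reindex_esum _ _ _ _ _ (fun k => (k.2, k.1.2))); split.
  - by [].
  - move=> [[a1 b1] c1] [[a2 b2] c2]; rewrite !inE /= => -[_ h1] [_ h2] [e1 e2].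
    by rewrite -h1 -h2 e1 e2.
  - by move=> [c b] _; exists ((phi c, b), c).
apply: le_esum => -[a b] _ /=.
apply: kl_esum => //.
- by move=> c; exact: fpr_ge0.
- by move=> c; rewrite mulr_ge0 // fpr_ge0.
- by move=> c _; apply: posq.
- under eq_esum do rewrite prE.
  rewrite prE -pr_part; apply: pr_eqX => x Xx /=; by rewrite (Hf x Xx).
- under eq_esum do rewrite EFinM muleC.
  rewrite esumZ ?fpr_ge0 //; last by move=> c; rewrite lee_fin fpr_ge0.
  under eq_esum do rewrite prE.
  have e : pr D [set x | phi (F x) = a] = pr D [set x | f x = a].
    by apply: pr_eqX => x Xx /=; rewrite (Hf x Xx).
  rewrite -pr_part1 e.
  by rewrite -[in LHS](prE [set x | f x = a]) -EFinM mulrC.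
- exact: posq.
Qed.

End Pr.

Theorem lemma1 (R : realType) (n : nat) (X : set 'rV[R]_n) (D : 'rV[R]_n -> R)
  (ell : pm1 R -> pm1 R -> R) (h : 'rV[R]_n -> pm1 R)
  (G : choiceType) (g1 g2 : 'rV[R]_n -> pm1 R -> G)
  (eps eps0 eps1 alpha : R)
  (E1 E2 U : choiceType) (e1 : 'rV[R]_n -> E1) (u : 'rV[R]_n -> U)
  (e2 : 'rV[R]_n -> E2) :
  @discrete_set ('rV[R]_n : topologicalType) X -> is_distribution X D ->
  0 < eps -> 0 < eps0 -> 0 < eps1 -> 0 < alpha ->
  eps_intersect D X (fun x => g1 x (h x)) (fun x => g2 x (h x)) eps e1 u e2 ->
  let ghat := fun (x : 'rV[R]_n) (_ : pm1 R) => (e1 x, u x, e2 x) in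
  ((valid D ell h g1 eps0 \/ valid D ell h g2 eps0) ->
     valid D ell h ghat eps0) /\
  ((complete D ell h g1 eps1 alpha \/ complete D ell h g2 eps1 alpha) ->
     complete D ell h ghat eps1 alpha).
Proof.
move=> _ [hD0 hDX hD1] _ _ _ _ [r1 [r2 [[ri1 r1K r1K'] [ri2 r2K r2K'] H1 H2 _]]] ghat.
have Eq1 x : X x -> g1 x (h x) = ri1 (e1 x, u x) by move=> Xx; rewrite -(H1 x Xx) r1K.
have Eq2 x : X x -> g2 x (h x) = ri2 (e2 x, u x) by move=> Xx; rewrite -(H2 x Xx) r2K.
pose phi1 (k : E1 * U * E2) := ri1 (k.1.1, k.1.2).
pose phi2 (k : E1 * U * E2) := ri2 (k.2, k.1.2).
split.
- case=> -[t Ht].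
  + exists (fun k => t (phi1 k)).
    rewrite (@expect_eqX _ _ X D hDX _ (fun x => ell (t (g1 x (h x))) (h x))) //.
    by move=> x Xx /=; rewrite Eq1.
  + exists (fun k => t (phi2 k)).
    rewrite (@expect_eqX _ _ X D hDX _ (fun x => ell (t (g2 x (h x))) (h x))) //.
    by move=> x Xx /=; rewrite Eq2.
- case=> Hc d gbar s HI; apply: Hc; apply: le_trans HI.
  + by apply: (@dpi _ _ X D hD0 hDX hD1 _ _ _ _ _ _ phi1) => x Xx /=; exact: Eq1.
  + by apply: (@dpi _ _ X D hD0 hDX hD1 _ _ _ _ _ _ phi2) => x Xx /=; exact: Eq2.
Qed.
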